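(* Let $a>0$, $b>2$ with $r:=a+b/2>4$, and let $u_+=1/2+(1/4-1/r)^{1/2}$. Let $(u(t),v(t))$ solve $$u'=(au^2+(b/2)v^2)(1-u)-u,\qquad v'=(av^2+(b/2)u^2)(1-v)-v,$$ with $u(0)=1$, $v(0)=0$. Then $\lim_{t\to\infty}u(t)=\lim_{t\to\infty}v(t)=u_+$. *)

(* Defs.v *)
From Stdlib Require Import Reals.
Open Scope R_scope.

Definition cv_at_infty (f : R -> R) (l : R) : Prop :=
  forall eps : R, 0 < eps -> exists T : R, forall t : R, T <= t -> Rabs (f t - l) < eps.

(* Main.v *)
Require Import Defs.
From Stdlib Require Import Reals Lra Psatz Classical.
Open Scope R_scope.

Definition cont (f : R -> R) (x : R) : Prop :=
  forall e, 0 < e -> exists d, 0 < d /\ forall y, Rabs (y - x) < d -> Rabs (f y - f x) < e.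

Lemma min_facts x y : Rmin x y <= x /\ Rmin x y <= y /\ (Rmin x y = x \/ Rmin x y = y).
Proof. unfold Rmin; destruct (Rle_dec x y); lra. Qed.

Lemma cont_of_dlim f x l : derivable_pt_lim f x l -> cont f x.
Proof.
  intro H.
  assert (Hc : continuity_pt f x) by (apply derivable_continuous_pt; exists l; exact H).
  unfold continuity_pt, continue_in, limit1_in, limit_in in Hc.
  intros e He. destruct (Hc e He) as [d [Hd Hf]].
  exists d; split; [exact Hd|]. intros y Hy.
  destruct (Req_dec y x) as [->|Hne].
  - rewrite Rminus_diag, Rabs_R0; exact He.
  - apply (Hf y). split.
    + split; [exact I| intro; apply Hne; symmetry; assumption].
    + simpl. unfold R_dist. exact Hy.
Qed.

Lemma cont_min f g x : cont f x -> cont g x -> cont (fun t => Rmin (f t) (g t)) x.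
Proof.
  intros Hf Hg e He.
  destruct (Hf e He) as [d1 [Hd1 H1]]. destruct (Hg e He) as [d2 [Hd2 H2]].
  destruct (min_facts d1 d2) as [m1 [m2 m3]].
  exists (Rmin d1 d2); split; [destruct m3; lra|].
  intros y Hy. specialize (H1 y ltac:(lra)). specialize (H2 y ltac:(lra)).
  apply Rabs_def2 in H1. apply Rabs_def2 in H2. apply Rabs_def1;
  unfold Rmin; destruct (Rle_dec (f y) (g y)); destruct (Rle_dec (f x) (g x)); lra.
Qed.

Lemma first_cross f a b : a <= b -> (forall t, a <= t <= b -> cont f t) -> 0 < f a -> f b <= 0 ->
  exists tau, a < tau <= b /\ f tau = 0 /\ forall s, a <= s < tau -> 0 < f s.
Proof.
  intros Hab0 Hc Ha Hb.
  set (E := fun x => a <= x <= b /\ forall s, a <= s <= x -> 0 < f s).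
  assert (HEb : bound E). { exists b. intros x [[_ Hx] _]. exact Hx. }
  assert (HEa : exists x, E x).
  { exists a. split. lra. intros s Hs. replace s with a by lra. exact Ha. }
  destruct (completeness E HEb HEa) as [tau [Hub Hlub]].
  assert (Hat : a <= tau).
  { apply Hub. split. lra. intros s Hs. replace s with a by lra. exact Ha. }
  assert (Htb : tau <= b) by (apply Hlub; intros x [[_ Hx] _]; exact Hx).
  assert (HA : forall s, a <= s < tau -> 0 < f s).
  { intros s Hs. destruct (classic (exists x, E x /\ s < x)) as [[x [[Hx1 Hx2] Hsx]]|Hn].
    - apply Hx2. lra.
    - exfalso. assert (tau <= s).
      { apply Hlub. intros x Ex. destruct (Rle_dec x s) as [h|h]; auto.
        exfalso; apply Hn; exists x; split; auto; lra. }
      lra. }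
  assert (HB : f tau <= 0).
  { destruct (Rle_dec (f tau) 0) as [h|h]; auto. exfalso.
    destruct (Hc tau (conj Hat Htb) (f tau)) as [d [Hd Hf]]; [lra|].
    assert (Hpos : forall y, Rabs (y - tau) < d -> 0 < f y).
    { intros y Hy. specialize (Hf y Hy). apply Rabs_def2 in Hf. lra. }
    destruct (Req_dec tau b) as [Heq|Hne].
    - rewrite Heq in h. lra.
    - destruct (min_facts (d/2) (b - tau)) as [m1 [m2 m3]].
      assert (Ex : E (tau + Rmin (d/2) (b - tau))).
      { split. split. lra. lra.
        intros s Hs. destruct (Rlt_le_dec s tau). apply HA; lra.
        apply Hpos. apply Rabs_def1; lra. }
      specialize (Hub _ Ex). destruct m3; lra. }
  assert (HC : 0 <= f tau).
  { destruct (Rle_dec 0 (f tau)) as [h|h]; auto. exfalso.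
    destruct (Hc tau (conj Hat Htb) (- f tau)) as [d [Hd Hf]]; [lra|].
    destruct (Req_dec a tau) as [Heq|Hne].
    - rewrite <- Heq in h. lra.
    - destruct (min_facts (d/2) (tau - a)) as [m1 [m2 m3]].
      assert (Hy := HA (tau - Rmin (d/2) (tau - a)) ltac:(destruct m3; lra)).
      specialize (Hf (tau - Rmin (d/2) (tau - a)) ltac:(apply Rabs_def1; destruct m3; lra)).
      apply Rabs_def2 in Hf. lra. }
  exists tau. split; [|split; [lra|exact HA]].
  split; [|exact Htb]. destruct (Req_dec a tau) as [Heq|Hne]; [rewrite <- Heq in HB; lra|lra].
Qed.

Lemma dsign f tau l a : a < tau -> derivable_pt_lim f tau l ->
  (forall s, a <= s < tau -> f tau < f s) -> l <= 0.
Proof.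
  intros Hat Hd Hs. destruct (Rle_dec l 0) as [h|h]; auto. exfalso.
  destruct (Hd (l/2) ltac:(lra)) as [[del Hdel] Hh]. simpl in Hh.
  destruct (min_facts (del/2) ((tau - a)/2)) as [m1 [m2 m3]].
  set (h0 := - Rmin (del/2) ((tau - a)/2)).
  assert (Hh0 : h0 < 0) by (unfold h0; destruct m3; lra).
  specialize (Hh h0 ltac:(lra) ltac:(rewrite Rabs_left; unfold h0; destruct m3; lra)).
  specialize (Hs (tau + h0) ltac:(unfold h0; destruct m3; lra)).
  apply Rabs_def2 in Hh.
  set (q := (f (tau + h0) - f tau) / h0) in Hh.
  assert (Hq : q * h0 = f (tau + h0) - f tau) by (unfold q; field; lra).
  nra.
Qed.

Lemma mvt_ge f f' a b k : a < b -> (forall t, a <= t <= b -> derivable_pt_lim f t (f' t)) ->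
  (forall t, a < t < b -> k <= f' t) -> k * (b - a) <= f b - f a.
Proof.
  intros Hab Hd Hk. destruct (MVT_cor2 f f' a b Hab Hd) as [c [Hc Hc2]].
  rewrite Hc. specialize (Hk c Hc2). nra.
Qed.

Lemma dlim_opp f x l : derivable_pt_lim f x l -> derivable_pt_lim (fun t => - f t) x (- l).
Proof. intro H. exact (derivable_pt_lim_opp f x l H). Qed.

Lemma dlim_plus f g x l1 l2 : derivable_pt_lim f x l1 -> derivable_pt_lim g x l2 ->
  derivable_pt_lim (fun t => f t + g t) x (l1 + l2).
Proof. intros H1 H2. exact (derivable_pt_lim_plus f g x l1 l2 H1 H2). Qed.

Lemma dlim_minus f g x l1 l2 : derivable_pt_lim f x l1 -> derivable_pt_lim g x l2 ->
  derivable_pt_lim (fun t => f t - g t) x (l1 - l2).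
Proof. intros H1 H2. exact (derivable_pt_lim_minus f g x l1 l2 H1 H2). Qed.

Lemma dlim_addc f x l k : derivable_pt_lim f x l -> derivable_pt_lim (fun t => f t + k) x l.
Proof.
  intro H. replace l with (l + 0) by ring.
  exact (derivable_pt_lim_plus f (fct_cte k) x l 0 H (derivable_pt_lim_const k x)).
Qed.

Lemma expo f f' a b K : a < b -> (forall t, a <= t <= b -> derivable_pt_lim f t (f' t)) ->
  (forall t, a < t < b -> - K * f t <= f' t) -> 0 < f a -> 0 < f b.
Proof.
  intros Hab Hd Hk Ha.
  set (g := fun t => f t * exp (K * t)).
  assert (He : forall t, derivable_pt_lim (fun s => exp (K * s)) t (exp (K * t) * (K * 1))).
  { intro t. apply (derivable_pt_lim_comp (fun s => K * s) exp t (K * 1)).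
    - exact (derivable_pt_lim_scal id K t 1 (derivable_pt_lim_id t)).
    - apply derivable_pt_lim_exp. }
  assert (Hg : forall t, a <= t <= b -> derivable_pt_lim g t (f' t * exp (K * t) + f t * (exp (K*t) * (K*1)))).
  { intros t Ht. exact (derivable_pt_lim_mult f (fun s => exp (K * s)) t _ _ (Hd t Ht) (He t)). }
  assert (Hm := mvt_ge g _ a b 0 Hab Hg).
  assert (H0 : 0 * (b - a) <= g b - g a).
  { apply Hm. intros t Ht. specialize (Hk t Ht). assert (0 < exp (K*t)) by apply exp_pos. nra. }
  unfold g in H0. assert (0 < exp (K*a)) by apply exp_pos. assert (0 < exp (K*b)) by apply exp_pos.
  nra.
Qed.

Lemma grow f f' t1 k : 0 < k -> (forall t, t1 <= t -> derivable_pt_lim f t (f' t)) ->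
  (forall t, t1 <= t -> k <= f' t) -> forall B, exists t, t1 <= t /\ B < f t.
Proof.
  intros Hk Hd Hf B. set (t := t1 + (Rabs (B - f t1) + 1) / k).
  assert (Ht : t1 < t). { unfold t. assert (0 < (Rabs (B - f t1) + 1)/k). apply Rdiv_lt_0_compat; [pose proof (Rabs_pos (B - f t1)); lra| lra]. lra. }
  exists t. split; [lra|].
  assert (Hm := mvt_ge f f' t1 t k Ht (fun s Hs => Hd s (proj1 Hs)) (fun s Hs => Hf s ltac:(lra))).
  assert (k * (t - t1) = Rabs (B - f t1) + 1) by (unfold t; field; lra).
  pose proof (Rle_abs (B - f t1)). lra.
Qed.

Lemma barrier f f' t1 L : (forall t, t1 <= t -> derivable_pt_lim f t (f' t)) -> L < f t1 ->
  (forall t, t1 <= t -> f t = L -> 0 < f' t) -> forall t, t1 <= t -> L < f t.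
Proof.
  intros Hd H1 Hc t Ht. destruct (Rlt_le_dec L (f t)) as [h|h]; auto. exfalso.
  assert (Hcc : forall s, t1 <= s <= t -> cont (fun s => f s - L) s).
  { intros s Hs. assert (Hc2 := cont_of_dlim _ _ _ (dlim_addc f s (f' s) (-L) (Hd s (proj1 Hs)))).
    intros e He. destruct (Hc2 e He) as [d [Hd0 Hd1]]. exists d. split; [exact Hd0|]. intros y Hy. simpl.
    specialize (Hd1 y Hy). replace (f y - L - (f s - L)) with (f y + - L - (f s + - L)) by ring. exact Hd1. }
  destruct (first_cross (fun s => f s - L) t1 t Ht Hcc ltac:(simpl; lra) ltac:(simpl; lra)) as [tau [Htau [H0 Hs]]].
  simpl in H0. assert (Hl := dsign f tau (f' tau) t1 (proj1 Htau) (Hd tau ltac:(lra))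
      (fun s Hs2 => ltac:(specialize (Hs s Hs2); simpl in Hs; lra))).
  specialize (Hc tau ltac:(lra) ltac:(lra)). lra.
Qed.

Lemma alg_sum1 a c x y : 0 < a -> 1 < c -> 4 < a + c -> x + y = 1 -> 0 <= y -> y <= x -> x <= 1 ->
  0 < ((a * x^2 + c * y^2) * (1 - x) - x) + ((a * y^2 + c * x^2) * (1 - y) - y).
Proof.
  intros ha hc hr hs hy hyx hx.
  replace y with (1 - x) by lra.
  set (p := x * (1 - x)).
  assert (Hp0 : 0 <= p) by (unfold p; nra).
  assert (Hp1 : p <= 1/4) by (unfold p; nra).
  replace ((a * x ^ 2 + c * (1 - x) ^ 2) * (1 - x) - x + ((a * (1 - x) ^ 2 + c * x ^ 2) * (1 - (1 - x)) - (1 - x)))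
    with ((c - 1) * (1 - 4 * p) + (a + c - 4) * p) by (unfold p; ring).
  destruct (Req_dec p 0) as [h|h].
  - rewrite h. nra.
  - assert (0 < p) by lra. nra.
Qed.

Lemma alg_d a c x y : 0 < a -> 1 < c -> 0 <= y -> y <= x -> x <= 1 ->
  - (3*a + 2*c + 1) * (x - y) <=
  ((a * x^2 + c * y^2) * (1 - x) - x) - ((a * y^2 + c * x^2) * (1 - y) - y).
Proof.
  intros ha hc hy hyx hx.
  set (g := (a - c) * (x + y) - a * (x^2 + x*y + y^2) + c * x * y - 1).
  replace (((a * x^2 + c * y^2) * (1 - x) - x) - ((a * y^2 + c * x^2) * (1 - y) - y))
    with ((x - y) * g) by (unfold g; ring).
  assert (Hg : - (3*a + 2*c + 1) <= g).
  { unfold g. assert (0 <= x*y) by nra. assert (x^2 + x*y + y^2 <= 3) by nra.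
    assert (a * (x^2 + x*y + y^2) <= 3 * a) by nra.
    assert ((a - c) * (x + y) >= - c * 2) by nra. nra. }
  nra.
Qed.

Lemma alg_vlow a c x y : 0 < a -> 1 < c -> 4 < a + c -> 0 <= y -> y <= 1/2 -> 1 <= x + y -> x <= 1 ->
  (1 - 2*y)/2 <= (a * y^2 + c * x^2) * (1 - y) - y.
Proof.
  intros ha hc hr hy hy2 hs hx.
  assert (H0 : (1 - y)^2 <= x^2) by nra.
  assert (H1 : c * (1 - y)^2 <= c * x^2) by (apply Rmult_le_compat_l; lra).
  assert (H2 : (a * y^2 + c * (1-y)^2) * (1 - y) <= (a * y^2 + c * x^2) * (1 - y)) by nra.
  assert (H3 : 3 * y^2 * (1-y) + (1-y)^3 <= a * y^2 * (1-y) + c * (1-y)^3).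
  { assert (E : a * y^2 * (1-y) + c * (1-y)^3 = (a + c) * (y^2 * (1-y)) + c * ((1-y)*(1-2*y))) by ring.
    assert (0 <= y^2 * (1-y)) by nra. assert (0 <= (1-y)*(1-2*y)) by nra.
    assert (4 * (y^2*(1-y)) <= (a+c) * (y^2*(1-y))) by nra.
    assert (1 * ((1-y)*(1-2*y)) <= c * ((1-y)*(1-2*y))) by nra.
    nra. }
  assert (H4 : 3 * y^2 * (1-y) + (1-y)^3 - y = (1 - 2*y) * ((1-y)^2 + y^2)) by ring.
  assert (H5a : 1/2 <= (1-y)^2 + y^2) by nra.
  assert (H5 : (1-2*y)/2 <= (1 - 2*y) * ((1-y)^2 + y^2)) by (assert (0 <= 1 - 2*y) by lra; nra).
  nra.
Qed.

Lemma alg_Fv a c x y : 0 <= y -> y <= x -> y <= 1 -> 0 < c ->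
  (a + c) * y^2 * (1 - y) - y <= (a * y^2 + c * x^2) * (1 - y) - y.
Proof. intros. assert (y^2 <= x^2) by nra. assert (0 <= c * (x^2 - y^2)) by nra.
  assert (0 <= c*(x^2-y^2)*(1-y)) by (apply Rmult_le_pos; lra). nra. Qed.

Lemma alg_Fu a c x y : 0 <= y -> y <= x -> x <= 1 -> 0 < c ->
  (a * x^2 + c * y^2) * (1 - x) - x <= (a + c) * x^2 * (1 - x) - x.
Proof. intros. assert (y^2 <= x^2) by nra. assert (0 <= c * (x^2 - y^2)) by nra.
  assert (0 <= c*(x^2-y^2)*(1-x)) by (apply Rmult_le_pos; lra). nra. Qed.

Lemma alg_Fid r um up x : um + up = 1 -> r * um * up = 1 ->
  r * x^2 * (1 - x) - x = - r * x * (x - um) * (x - up).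
Proof.
  intros h1 h2.
  replace (- r * x * (x - um) * (x - up)) with (- r * x^3 + r * x^2 * (um + up) - x * (r * um * up)) by ring.
  rewrite h1, h2. ring.
Qed.

Lemma alg_init a c r eta x y : 0 < a -> 1 < c -> r = a + c -> 0 < eta -> eta <= 1/2 ->
  eta * (2*(3*c+3*r+2)) <= c - 1 -> eta * (16*r) <= 1 ->
  1 - eta < x < 1 + eta -> - eta < y < eta ->
  (a * x^2 + c * y^2) * (1 - x) - x <= - 1/4 /\
  1 <= (a * y^2 + c * x^2) * (1 - y) - y /\
  (c - 1)/2 <= ((a * x^2 + c * y^2) * (1 - x) - x) + ((a * y^2 + c * x^2) * (1 - y) - y).
Proof.
  intros ha hc hr he0 he1 he2 he3 hx hy.
  set (A := a * x^2 + c * y^2).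
  assert (HA0 : 0 <= A) by (unfold A; nra).
  assert (HA1 : A <= 3 * r).
  { unfold A. assert (x^2 <= 9/4) by nra. assert (y^2 <= 1/4) by nra. nra. }
  assert (HAu : A * (1 - x) <= 3 * r * eta).
  { assert (A * (1-x) <= A * eta) by nra. nra. }
  assert (HAl : - (3 * r * eta) <= A * (1 - x)).
  { assert (- (A * eta) <= A * (1-x)) by nra. nra. }
  set (B := a * y^2 + c * x^2).
  assert (HB : c * (1 - eta)^2 <= B).
  { unfold B. assert ((1-eta)^2 <= x^2) by nra. nra. }
  assert (HB2 : c * (1 - 3*eta) <= B * (1 - y)).
  { assert (c * (1-eta)^2 * (1-eta) <= B * (1-y)).
    { assert (0 <= c * (1-eta)^2) by nra. assert (1 - eta <= 1 - y) by lra. nra. }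
    assert ((1 - 3*eta) <= (1-eta)^2*(1-eta)) by nra. nra. }
  split; [|split].
  - nra.
  - nra.
  - nra.
Qed.

Lemma near0 f : limit1_in f (fun t => 0 <= t) (f 0) 0 ->
  forall e, 0 < e -> exists d, 0 < d /\ forall x, 0 <= x -> x < d -> Rabs (f x - f 0) < e.
Proof.
  intros H e He. destruct (H e He) as [d [Hd Hf]]. exists d; split; auto.
  intros x H0 Hx. specialize (Hf x). simpl in Hf. unfold R_dist in Hf. apply Hf. split; auto.
  rewrite Rminus_0_r, Rabs_right; lra.
Qed.

Lemma prod3_mono p1 p2 p3 q1 q2 q3 : 0 <= p1 <= q1 -> 0 <= p2 <= q2 -> 0 <= p3 <= q3 ->
  p1 * p2 * p3 <= q1 * q2 * q3.
Proof.
  intros. apply Rmult_le_compat; try lra. apply Rmult_le_pos; lra.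
  apply Rmult_le_compat; lra.
Qed.

Lemma cont_ext f g x : (forall y, f y = g y) -> cont f x -> cont g x.
Proof. intros He Hf e H. destruct (Hf e H) as [d [Hd Hd2]]. exists d. split; auto.
  intros y Hy. rewrite <- !He. auto. Qed.

Lemma min_pos x y : 0 < Rmin x y -> 0 < x /\ 0 < y.
Proof. unfold Rmin; destruct (Rle_dec x y); lra. Qed.
Lemma min_pos_i x y : 0 < x -> 0 < y -> 0 < Rmin x y.
Proof. unfold Rmin; destruct (Rle_dec x y); lra. Qed.
Lemma min_zero x y : Rmin x y = 0 -> 0 <= x /\ 0 <= y /\ (x = 0 \/ y = 0).
Proof. unfold Rmin; destruct (Rle_dec x y); lra. Qed.
Lemma min_nonneg x y : 0 <= Rmin x y -> 0 <= x /\ 0 <= y.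
Proof. unfold Rmin; destruct (Rle_dec x y); lra. Qed.

Theorem lemma10p1 (a b : R) (u v : R -> R)
  (ha : 0 < a) (hb : 2 < b) (hr : 4 < a + b / 2)
  (hu' : forall t : R, 0 < t ->
     derivable_pt_lim u t ((a * (u t)^2 + (b/2) * (v t)^2) * (1 - u t) - u t))
  (hv' : forall t : R, 0 < t ->
     derivable_pt_lim v t ((a * (v t)^2 + (b/2) * (u t)^2) * (1 - v t) - v t))
  (hu0c : limit1_in u (fun t => 0 <= t) (u 0) 0)
  (hv0c : limit1_in v (fun t => 0 <= t) (v 0) 0)
  (hu0 : u 0 = 1) (hv0 : v 0 = 0) :
  cv_at_infty u (1/2 + sqrt (1/4 - 1 / (a + b / 2))) /\
  cv_at_infty v (1/2 + sqrt (1/4 - 1 / (a + b / 2))).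
Proof.
  set (c := b/2) in *. set (r := a + c) in *.
  set (sq := sqrt (1/4 - 1/r)). set (up := 1/2 + sq). set (um := 1/2 - sq).
  set (U' := fun t => (a * (u t)^2 + c * (v t)^2) * (1 - u t) - u t).
  set (V' := fun t => (a * (v t)^2 + c * (u t)^2) * (1 - v t) - v t).
  assert (hU : forall t, 0 < t -> derivable_pt_lim u t (U' t)) by exact hu'.
  assert (hV : forall t, 0 < t -> derivable_pt_lim v t (V' t)) by exact hv'.
  assert (hc : 1 < c) by (unfold c; lra).
  assert (hr4 : 4 < r) by exact hr.
  assert (Hr0 : 0 < r) by lra.
  assert (hr4' : 4 < a + c) by exact hr4.
  assert (Hq : 0 < 1/4 - 1/r).
  { assert (Ew : 1/r * r = 1) by (field; lra). assert (0 < 1/r) by (apply Rdiv_lt_0_compat; lra).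
    assert (1/r < 1/4) by nra. lra. }
  assert (HS2 : sq * sq = 1/4 - 1/r) by (apply sqrt_sqrt; lra).
  assert (HS0 : 0 < sq) by (apply sqrt_lt_R0; lra).
  assert (Hw : 0 < 1/r) by (apply Rdiv_lt_0_compat; lra).
  assert (HS1 : sq < 1/2) by (assert (sq*sq < 1/4) by lra; nra).
  assert (Hsum : um + up = 1) by (unfold um, up; lra).
  assert (Hprod : r * um * up = 1).
  { unfold um, up. replace (r * (1/2 - sq) * (1/2 + sq)) with (r * (1/4 - sq*sq)) by field.
    rewrite HS2. field. lra. }
  assert (Hum : 0 < um) by (unfold um; lra).
  assert (Hup : um < up) by (unfold um, up; lra).
  assert (Hum2 : um < 1/2) by (unfold um; lra).
  assert (Hup2 : up < 1) by (unfold up; lra).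
  assert (HP0 : exists t0, 0 < t0 /\ 0 < v t0 /\ v t0 < u t0 /\ u t0 < 1 /\ 1 < u t0 + v t0).
  { set (eta := Rmin (1/2) (Rmin ((c-1)/(2*(3*c+3*r+2))) (1/(16*r)))).
    assert (Heta : 0 < eta /\ eta <= 1/2 /\ eta * (2*(3*c+3*r+2)) <= c - 1 /\ eta * (16*r) <= 1).
    { assert (E1 : (c-1)/(2*(3*c+3*r+2)) * (2*(3*c+3*r+2)) = c - 1) by (field; lra).
      assert (E2 : 1/(16*r) * (16*r) = 1) by (field; lra).
      assert (P1 : 0 < (c-1)/(2*(3*c+3*r+2))) by (apply Rdiv_lt_0_compat; lra).
      assert (P2 : 0 < 1/(16*r)) by (apply Rdiv_lt_0_compat; lra).
      unfold eta. destruct (min_facts ((c-1)/(2*(3*c+3*r+2))) (1/(16*r))) as [m1 [m2 m3]].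
      destruct (min_facts (1/2) (Rmin ((c-1)/(2*(3*c+3*r+2))) (1/(16*r)))) as [n1 [n2 n3]].
      set (m := Rmin ((c - 1) / (2 * (3 * c + 3 * r + 2))) (1 / (16 * r))) in *.
      set (n := Rmin (1/2) m) in *.
      assert (0 < m) by (destruct m3; lra). assert (0 < n) by (destruct n3; lra).
      split; [lra|split; [lra|split]]; nra. }
    destruct Heta as [He0 [He1 [He2 He3]]].
    destruct (near0 u hu0c eta He0) as [al1 [Hal1 Hu1]].
    destruct (near0 v hv0c eta He0) as [al2 [Hal2 Hv1]].
    rewrite hu0 in Hu1. rewrite hv0 in Hv1.
    destruct (min_facts al1 al2) as [d1 [d2 d3]].
    set (del := Rmin al1 al2) in *.
    assert (Hdel : 0 < del) by (destruct d3; lra).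
    assert (Hb : forall t, 0 < t < del -> U' t <= -1/4 /\ 1 <= V' t /\ (c-1)/2 <= U' t + V' t).
    { intros t Ht. specialize (Hu1 t ltac:(lra) ltac:(lra)). specialize (Hv1 t ltac:(lra) ltac:(lra)).
      apply Rabs_def2 in Hu1. apply Rabs_def2 in Hv1.
      unfold U', V'. apply (alg_init a c r eta); try lra; reflexivity. }
    set (t0 := del/2).
    set (e' := Rmin (t0/16) ((c-1)*t0/16)).
    assert (He' : 0 < e' /\ e' <= t0/16 /\ e' <= (c-1)*t0/16).
    { destruct (min_facts (t0/16) ((c-1)*t0/16)) as [m1 [m2 m3]]. unfold e'.
      assert (0 < t0) by (unfold t0; lra). assert (0 < (c-1)*t0/16) by (apply Rdiv_lt_0_compat; nra).
      destruct m3; lra. }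
    destruct He' as [He'0 [He'1 He'2]].
    destruct (near0 u hu0c e' He'0) as [al3 [Hal3 Hu3]].
    destruct (near0 v hv0c e' He'0) as [al4 [Hal4 Hv4]].
    rewrite hu0 in Hu3. rewrite hv0 in Hv4.
    set (s := Rmin (t0/2) (Rmin al3 al4) / 2).
    assert (Hs : 0 < s /\ s < t0/2 + 0 /\ s < al3 /\ s < al4).
    { destruct (min_facts al3 al4) as [m1 [m2 m3]].
      destruct (min_facts (t0/2) (Rmin al3 al4)) as [n1 [n2 n3]].
      assert (0 < t0) by (unfold t0; lra).
      assert (0 < Rmin al3 al4) by (destruct m3; lra).
      unfold s. destruct n3; lra. }
    destruct Hs as [Hs0 [Hs1 [Hs2 Hs3]]].
    assert (Ht0 : 0 < t0 /\ t0 < del) by (unfold t0; lra).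
    specialize (Hu3 s ltac:(lra) Hs2). specialize (Hv4 s ltac:(lra) Hs3).
    apply Rabs_def2 in Hu3. apply Rabs_def2 in Hv4.
    assert (M1 := mvt_ge (fun t => - u t) (fun t => - U' t) s t0 (1/4) ltac:(lra)
      (fun t Ht => dlim_opp u t (U' t) (hU t ltac:(lra)))
      (fun t Ht => ltac:(destruct (Hb t ltac:(lra)); lra))).
    assert (M2 := mvt_ge v V' s t0 1 ltac:(lra)
      (fun t Ht => hV t ltac:(lra))
      (fun t Ht => ltac:(destruct (Hb t ltac:(lra)) as [_ [? _]]; lra))).
    assert (M3 := mvt_ge (fun t => u t + v t) (fun t => U' t + V' t) s t0 ((c-1)/2) ltac:(lra)
      (fun t Ht => dlim_plus u v t (U' t) (V' t) (hU t ltac:(lra)) (hV t ltac:(lra)))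
      (fun t Ht => ltac:(destruct (Hb t ltac:(lra)) as [_ [_ ?]]; lra))).
    simpl in M1, M3.
    specialize (Hu1 t0 ltac:(lra) ltac:(lra)). specialize (Hv1 t0 ltac:(lra) ltac:(lra)).
    apply Rabs_def2 in Hu1. apply Rabs_def2 in Hv1.
    assert (Hcs : (c-1)*t0/4 <= (c-1)/2*(t0-s)).
    { assert (E : (c-1)/2*(t0-s) - (c-1)*t0/4 = (c-1)*(t0/2 - s)/2) by field.
      assert (0 <= (c-1)*(t0/2 - s)) by (apply Rmult_le_pos; lra). lra. }
    exists t0. split; [lra|]. split; [lra|]. split; [lra|]. split; lra. }
  destruct HP0 as [t0 [Ht0 HP0]].
  set (m := fun t => Rmin (Rmin (v t) (u t - v t)) (Rmin (1 - u t) (u t + v t - 1))).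
  assert (Hcm : forall t, 0 < t -> cont m t).
  { intros t Ht. unfold m. apply cont_min; apply cont_min.
    - exact (cont_of_dlim _ _ _ (hV t Ht)).
    - exact (cont_of_dlim _ _ _ (dlim_minus u v t _ _ (hU t Ht) (hV t Ht))).
    - apply (cont_ext (fun s => - u s + 1)). intro; ring.
      exact (cont_of_dlim _ _ _ (dlim_addc _ t _ 1 (dlim_opp u t _ (hU t Ht)))).
    - apply (cont_ext (fun s => u s + v s + -1)). intro; ring.
      exact (cont_of_dlim _ _ _ (dlim_addc _ t _ (-1) (dlim_plus u v t _ _ (hU t Ht) (hV t Ht)))). }
  assert (Hmp : forall t, 0 < m t -> 0 < v t /\ v t < u t /\ u t < 1 /\ 1 < u t + v t).
  { intros t H. unfold m in H. apply min_pos in H. destruct H as [H1 H2].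
    apply min_pos in H1. apply min_pos in H2. lra. }
  assert (Hinv : forall t, t0 <= t -> 0 < v t /\ v t < u t /\ u t < 1 /\ 1 < u t + v t).
  { intros t Ht. apply Hmp. destruct (Rlt_le_dec 0 (m t)) as [h|h]; auto. exfalso.
    assert (Hm0 : 0 < m t0).
    { unfold m. apply min_pos_i; apply min_pos_i; lra. }
    destruct (first_cross m t0 t Ht (fun s Hs => Hcm s ltac:(lra)) Hm0 h) as [tau [Htau [Hmt Hbefore]]].
    assert (HP : forall s, t0 <= s < tau -> 0 < v s /\ v s < u s /\ u s < 1 /\ 1 < u s + v s)
      by (intros s Hs; apply Hmp; apply Hbefore; exact Hs).
    unfold m in Hmt. apply min_zero in Hmt. destruct Hmt as [H1 [H2 H3]].
    apply min_nonneg in H1. apply min_nonneg in H2.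
    destruct H1 as [Hv0' Hd0]. destruct H2 as [Hu1' He0].
    assert (Htp : 0 < tau) by lra.
    destruct H3 as [H3|H3]; apply min_zero in H3; destruct H3 as [_ [_ [H3|H3]]].
    - (* v tau = 0 *)
      assert (Hl := dsign v tau (V' tau) t0 (proj1 Htau) (hV tau Htp)
        (fun s Hs => ltac:(specialize (HP s Hs); lra))).
      unfold V' in Hl. rewrite H3 in Hl.
      assert (1 <= u tau) by lra. nra.
    - (* u tau = v tau *)
      assert (Hx := expo (fun s => u s - v s) (fun s => U' s - V' s) t0 tau (3*a + 2*c + 1) (proj1 Htau)
        (fun s Hs => dlim_minus u v s _ _ (hU s ltac:(lra)) (hV s ltac:(lra)))
        (fun s Hs => ltac:(specialize (HP s ltac:(lra)); unfold U', V'; apply alg_d; lra))).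
      simpl in Hx. lra.
    - (* u tau = 1 *)
      assert (Hl := dsign (fun s => - u s) tau (- U' tau) t0 (proj1 Htau) (dlim_opp u tau _ (hU tau Htp))
        (fun s Hs => ltac:(specialize (HP s Hs); lra))).
      unfold U' in Hl. replace (1 - u tau) with 0 in Hl by lra. lra.
    - (* u + v = 1 *)
      assert (Hl := dsign (fun s => u s + v s) tau (U' tau + V' tau) t0 (proj1 Htau)
        (dlim_plus u v tau _ _ (hU tau Htp) (hV tau Htp))
        (fun s Hs => ltac:(specialize (HP s Hs); lra))).
      assert (Hpos : 0 < U' tau + V' tau).
      { unfold U', V'. apply alg_sum1; try lra. }
      lra. }
  assert (Hume : um = 1/2 - sq) by reflexivity.
  assert (Hupe : up = 1/2 + sq) by reflexivity.
  assert (HF : forall x, r * x^2 * (1 - x) - x = - r * x * (x - um) * (x - up))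
    by (intro x; apply alg_Fid; assumption).
  assert (HVF : forall t, t0 <= t -> r * (v t)^2 * (1 - v t) - v t <= V' t).
  { intros t Ht. destruct (Hinv t Ht) as [h1 [h2 [h3 h4]]]. unfold V', r. apply alg_Fv; lra. }
  assert (HUF : forall t, t0 <= t -> U' t <= r * (u t)^2 * (1 - u t) - u t).
  { intros t Ht. destruct (Hinv t Ht) as [h1 [h2 [h3 h4]]]. unfold U', r. apply alg_Fu; lra. }
  assert (HS4 : exists t1, t0 <= t1 /\ um < v t1).
  { apply NNPP. intro Hn.
    assert (Hall : forall t, t0 <= t -> v t <= um).
    { intros t Ht. destruct (Rle_dec (v t) um) as [h|h]; auto. exfalso. apply Hn. exists t. split; lra. }
    assert (Hg : forall t, t0 <= t -> sq <= V' t).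
    { intros t Ht. destruct (Hinv t Ht) as [h1 [h2 [h3 h4]]]. specialize (Hall t Ht).
      assert (H := alg_vlow a c (u t) (v t) ha hc hr4' ltac:(lra) ltac:(lra) ltac:(lra) ltac:(lra)).
      unfold V'. lra. }
    destruct (grow v V' t0 sq HS0 (fun t Ht => hV t ltac:(lra)) Hg 1) as [t [Ht Hvt]].
    destruct (Hinv t Ht) as [h1 [h2 [h3 h4]]]. lra. }
  assert (Hupper : forall eps, 0 < eps -> exists T, t0 <= T /\ forall t, T <= t -> u t < up + eps).
  { intros eps He.
    set (k := r * up * (up - um) * eps).
    assert (Hk : 0 < k).
    { unfold k. apply Rmult_lt_0_compat; [apply Rmult_lt_0_compat; [apply Rmult_lt_0_compat|]|]; lra. }
    assert (Hdec : forall t, t0 <= t -> up + eps <= u t -> U' t <= - k).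
    { intros t Ht Hu. specialize (HUF t Ht). rewrite HF in HUF.
      assert (Hm : up * (up - um) * eps <= u t * (u t - um) * (u t - up)) by (apply prod3_mono; lra).
      assert (E : - r * u t * (u t - um) * (u t - up) = - (r * (u t * (u t - um) * (u t - up)))) by ring.
      assert (E2 : k = r * (up * (up - um) * eps)) by (unfold k; ring).
      assert (r * (up * (up - um) * eps) <= r * (u t * (u t - um) * (u t - up)))
        by (apply Rmult_le_compat_l; lra).
      lra. }
    assert (Hreach : exists T, t0 <= T /\ u T < up + eps).
    { apply NNPP; intro Hn.
      assert (Hall : forall t, t0 <= t -> up + eps <= u t).
      { intros t Ht. destruct (Rle_dec (up+eps) (u t)) as [h|h]; auto. exfalso; apply Hn; exists t; split; lra. }
      assert (Hg : forall t, t0 <= t -> k <= - U' t).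
      { intros t Ht. specialize (Hdec t Ht (Hall t Ht)). lra. }
      destruct (grow (fun t => - u t) (fun t => - U' t) t0 k Hk
         (fun t Ht => dlim_opp u t _ (hU t ltac:(lra))) Hg 0) as [t [Ht Hut]].
      destruct (Hinv t Ht) as [h1 [h2 [h3 h4]]]. cbv beta in Hut. lra. }
    destruct Hreach as [T [HT HuT]].
    exists T. split; auto. intros t Ht.
    assert (Hcr : forall s, T <= s -> - u s = - (up + eps) -> 0 < - U' s).
    { intros s Hs Heq. assert (Hd := Hdec s ltac:(lra) ltac:(lra)). lra. }
    assert (Hb := barrier (fun s => - u s) (fun s => - U' s) T (-(up+eps))
      (fun s Hs => dlim_opp u s _ (hU s ltac:(lra))) ltac:(cbv beta; lra) Hcr t Ht).
    cbv beta in Hb. lra. }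
  destruct HS4 as [t1 [Ht1 Hvt1]].
  assert (HFpos : forall x, um < x -> x < up -> 0 < r * x^2 * (1 - x) - x).
  { intros x h1 h2. rewrite HF.
    assert (0 < x * (x - um) * (up - x)) by (apply Rmult_lt_0_compat; [apply Rmult_lt_0_compat|]; lra).
    replace (- r * x * (x - um) * (x - up)) with (r * (x * (x - um) * (up - x))) by ring.
    apply Rmult_lt_0_compat; lra. }
  assert (Hlower : forall eps, 0 < eps -> exists T, t0 <= T /\ forall t, T <= t -> up - eps < v t).
  { intros eps He.
    set (e1 := Rmin eps sq).
    assert (He1 : 0 < e1 /\ e1 <= eps /\ e1 <= sq)
      by (destruct (min_facts eps sq) as [? [? [h|h]]]; unfold e1; lra).
    set (L := up - e1).
    assert (HL : um < L /\ L < up) by (unfold L; lra).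
    set (m0 := Rmin (v t1) L).
    assert (Hm0 : um < m0 /\ m0 <= v t1 /\ m0 <= L)
      by (destruct (min_facts (v t1) L) as [? [? [h|h]]]; unfold m0; lra).
    set (l := (um + m0)/2).
    assert (Hl : um < l /\ l < m0) by (unfold l; lra).
    assert (Hcr1 : forall s, t1 <= s -> v s = l -> 0 < V' s).
    { intros s Hs Heq. assert (Hx := HVF s ltac:(lra)). rewrite Heq in Hx.
      assert (Hy := HFpos l ltac:(lra) ltac:(lra)). lra. }
    assert (Habove := barrier v V' t1 l (fun s Hs => hV s ltac:(lra)) ltac:(lra) Hcr1).
    set (k := r * l * (l - um) * (up - L)).
    assert (Hk : 0 < k).
    { unfold k. apply Rmult_lt_0_compat; [apply Rmult_lt_0_compat; [apply Rmult_lt_0_compat|]|]; lra. }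
    assert (Hgr : forall t, t1 <= t -> v t <= L -> k <= V' t).
    { intros t Ht HvL. assert (Hx := HVF t ltac:(lra)). rewrite HF in Hx.
      assert (Hab := Habove t Ht).
      assert (Hm : l * (l - um) * (up - L) <= v t * (v t - um) * (up - v t)) by (apply prod3_mono; lra).
      assert (E : - r * v t * (v t - um) * (v t - up) = r * (v t * (v t - um) * (up - v t))) by ring.
      assert (E2 : k = r * (l * (l - um) * (up - L))) by (unfold k; ring).
      assert (r * (l * (l - um) * (up - L)) <= r * (v t * (v t - um) * (up - v t)))
        by (apply Rmult_le_compat_l; lra).
      lra. }
    assert (Hreach : exists T, t1 <= T /\ L < v T).
    { apply NNPP; intro Hn.
      assert (Hall : forall t, t1 <= t -> v t <= L).
      { intros t Ht. destruct (Rle_dec (v t) L) as [h|h]; auto. exfalso; apply Hn; exists t; split; lra. }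
      destruct (grow v V' t1 k Hk (fun t Ht => hV t ltac:(lra))
        (fun t Ht => Hgr t Ht (Hall t Ht)) 1) as [t [Ht Hvt]].
      destruct (Hinv t ltac:(lra)) as [h1 [h2 [h3 h4]]]. lra. }
    destruct Hreach as [T [HT HvT]].
    assert (Hcr2 : forall s, T <= s -> v s = L -> 0 < V' s).
    { intros s Hs Heq. assert (Hx := HVF s ltac:(lra)). rewrite Heq in Hx.
      assert (Hy := HFpos L ltac:(lra) ltac:(lra)). lra. }
    assert (Hst := barrier v V' T L (fun s Hs => hV s ltac:(lra)) HvT Hcr2).
    exists T. split; [lra|]. intros t Ht. specialize (Hst t Ht). unfold L in Hst. lra. }
  unfold cv_at_infty.
  split; intros eps He;
  destruct (Hupper eps He) as [T1 [HT1 H1]]; destruct (Hlower eps He) as [T2 [HT2 H2]];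
  exists (Rmax T1 T2); intros t Ht;
  assert (T1 <= t) by (eapply Rle_trans; [apply Rmax_l|exact Ht]);
  assert (T2 <= t) by (eapply Rle_trans; [apply Rmax_r|exact Ht]);
  specialize (H1 t ltac:(assumption)); specialize (H2 t ltac:(assumption));
  destruct (Hinv t ltac:(lra)) as [h1 [h2 [h3 h4]]]; apply Rabs_def1; lra.
Qed.
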